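(* Let $M$ be a pointed metric space and $\mu\in S_{\mathcal{F}(M)}$. Suppose that for every $\eta>0$, $\mu$ can be written as a norm-convergent series $\mu=\sum_{k=1}^\infty a_k m_{x_ky_k}$ with $a_k\in\mathbb{R}$, $x_k\neq y_k$, $\sum_{k}|a_k|<1+\eta$, and such that each pair $(x_k,y_k)$ is discretely connectable in $M$. Then $\mu$ is a $\Delta$-point of $\mathcal{F}(M)$.
   Context: For a pointed metric space $(M,d)$, ${\mathrm{Lip}}_0(M)$ is the space of Lipschitz $f:M\to\mathbb{R}$ vanishing at the base point, normed by the Lipschitz constant; $\mathcal{F}(M)$ is the closed linear span of the point evaluations $\delta(x)$ in ${\mathrm{Lip}}_0(M)^*$. For $x\ne y$ the molecule is $m_{xy}=(\delta(x)-\delta(y))/d(x,y)\in S_{\mathcal{F}(M)}$. Points $x,y$ are $\varepsilon$-discretely connectable if there are $p_0=x,p_1,\dots,p_{n+1}=y$ in $M$ with $d(p_i,p_{i+1})<\varepsilon$ for all $i$ and $\sum_{i=0}^nd(p_i,p_{i+1})<d(x,y)+\varepsilon$; discretely connectable if this holds for every $\varepsilon>0$. A point $z\in S_X$ of a Banach space is a $\Delta$-point if $\sup_{w\in S}\|z-w\|=2$ for every slice $S=\{w\in B_X:f(w)>1-\alpha\}$ ($f\in S_{X^*}$, $\alpha>0$) of $B_X$ with $z\in S$. *)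

(* Defs.v *)
From Stdlib Require Import Reals List Lra.
From Coquelicot Require Import Coquelicot.
Open Scope R_scope.

Section LipFree.
Variable M : Type.
Variable d : M -> M -> R.

Definition is_metric : Prop :=
  (forall x y, 0 <= d x y) /\ (forall x y, d x y = 0 <-> x = y) /\
  (forall x y, d x y = d y x) /\ (forall x y z, d x z <= d x y + d y z).

Definition lip_le (f : M -> R) (L : R) : Prop :=
  forall x y, Rabs (f x - f y) <= L * d x y.

Definition Lip0 (x0 : M) (f : M -> R) : Prop :=
  f x0 = 0 /\ exists L, lip_le f L.

(* Elements of Lip_0(M)^* are represented as functions on M -> R, of which
   only the values on Lip_0(M) matter. *)
Definition functional := (M -> R) -> R.

Definition is_Lip0_dual (x0 : M) (phi : functional) : Prop :=
  (forall f g a b, Lip0 x0 f -> Lip0 x0 g ->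
     phi (fun t => a * f t + b * g t) = a * phi f + b * phi g) /\
  (exists C, forall f L, Lip0 x0 f -> lip_le f L -> Rabs (phi f) <= C * L).

Definition dnorm (x0 : M) (phi : functional) : Rbar :=
  Lub_Rbar (fun t => exists f, Lip0 x0 f /\ lip_le f 1 /\ t = Rabs (phi f)).

Definition fsub (phi psi : functional) : functional := fun f => phi f - psi f.
Definition fscal (a : R) (phi : functional) : functional := fun f => a * phi f.

Definition delta (x : M) : functional := fun f => f x.
Definition molecule (x y : M) : functional := fun f => (f x - f y) / d x y.

Definition delta_comb (l : list (R * M)) : functional :=
  fun f => fold_right (fun p acc => fst p * f (snd p) + acc) 0 l.

(* F(M): closed linear span of the delta(x) in Lip_0(M)^* *)
Definition inFM (x0 : M) (mu : functional) : Prop :=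
  is_Lip0_dual x0 mu /\
  forall eps, 0 < eps -> exists l : list (R * M),
    Rbar_lt (dnorm x0 (fsub mu (delta_comb l))) eps.

Definition S_FM (x0 : M) (mu : functional) : Prop :=
  inFM x0 mu /\ dnorm x0 mu = Finite 1.
Definition B_FM (x0 : M) (mu : functional) : Prop :=
  inFM x0 mu /\ Rbar_le (dnorm x0 mu) 1.

Definition FM_dual_linear (x0 : M) (G : functional -> R) : Prop :=
  forall mu nu a b, inFM x0 mu -> inFM x0 nu ->
    G (fun f => a * mu f + b * nu f) = a * G mu + b * G nu.
Definition FM_dual_norm (x0 : M) (G : functional -> R) : Rbar :=
  Lub_Rbar (fun t => exists w, B_FM x0 w /\ t = Rabs (G w)).
(* unit sphere of F(M)^* (norm 1 implies boundedness, hence continuity) *)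
Definition S_FM_dual (x0 : M) (G : functional -> R) : Prop :=
  FM_dual_linear x0 G /\ FM_dual_norm x0 G = Finite 1.

Definition in_slice (x0 : M) (G : functional -> R) (alpha : R) (w : functional) : Prop :=
  B_FM x0 w /\ G w > 1 - alpha.

Definition Delta_point (x0 : M) (z : functional) : Prop :=
  S_FM x0 z /\
  forall G alpha, S_FM_dual x0 G -> 0 < alpha -> in_slice x0 G alpha z ->
    Lub_Rbar (fun t => exists w, in_slice x0 G alpha w /\
                          Finite t = dnorm x0 (fsub z w)) = Finite 2.

Fixpoint chain_steps_lt (eps : R) (p : list M) : Prop :=
  match p with
  | a :: ((b :: _) as t) => d a b < eps /\ chain_steps_lt eps t
  | _ => True
  end.
Fixpoint chain_length (p : list M) : R :=
  match p with
  | a :: ((b :: _) as t) => d a b + chain_length t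
  | _ => 0
  end.

Definition eps_disc_connectable (eps : R) (x y : M) : Prop :=
  exists l : list M,
    chain_steps_lt eps (x :: l ++ y :: nil) /\
    chain_length (x :: l ++ y :: nil) < d x y + eps.

Definition disc_connectable (x y : M) : Prop :=
  forall eps, 0 < eps -> eps_disc_connectable eps x y.

Definition mol_partial_sum (a : nat -> R) (x y : nat -> M) (n : nat) : functional :=
  fun f => sum_n (fun k => a k * molecule (x k) (y k) f) n.

Definition mol_series_norm_conv (x0 : M) (mu : functional)
    (a : nat -> R) (x y : nat -> M) : Prop :=
  forall eps, 0 < eps -> exists N : nat, forall n, (N <= n)%nat ->
    Rbar_lt (dnorm x0 (fsub mu (mol_partial_sum a x y n))) eps.

End LipFree.

(* Main.v *)
Require Import Defs.
From Stdlib Require Import Reals List Lra Psatz FunctionalExtensionality Classical.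
From Coquelicot Require Import Coquelicot.
Open Scope R_scope.

Lemma series_partial_le (a : nat -> R) s n :
  (forall k, 0 <= a k) -> is_series a s -> sum_n a n <= s.
Proof.
  intros Ha Hs.
  assert (Hl : is_lim_seq (sum_n a) s) by exact Hs.
  assert (Hmono : forall m, sum_n a n <= sum_n a (n + m)).
  { induction m. rewrite Nat.add_0_r; lra.
    rewrite Nat.add_succ_r, sum_Sn. simpl. specialize (Ha (S (n+m))). unfold plus; simpl. lra. }
  assert (H := is_lim_seq_le_loc (fun _ => sum_n a n) (sum_n a) (sum_n a n) s).
  simpl in H. apply H; [| apply is_lim_seq_const | exact Hl].
  exists n. intros m Hm. replace m with (n + (m - n))%nat by lia. apply Hmono.
Qed.

Lemma sum_n_abs_le (u v : nat -> R) n :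
  (forall k, (k <= n)%nat -> Rabs (u k) <= v k) -> Rabs (sum_n u n) <= sum_n v n.
Proof.
  induction n; intros H.
  - rewrite !sum_O. apply H; lia.
  - rewrite !sum_Sn. unfold plus; simpl.
    eapply Rle_trans. apply Rabs_triang.
    apply Rplus_le_compat. apply IHn; intros; apply H; lia. apply H; lia.
Qed.

Lemma sum_n_le_loc (u v : nat -> R) n :
  (forall k, (k <= n)%nat -> u k <= v k) -> sum_n u n <= sum_n v n.
Proof.
  induction n; intros H.
  - rewrite !sum_O. apply H; lia.
  - rewrite !sum_Sn. unfold plus; simpl.
    apply Rplus_le_compat. apply IHn; intros; apply H; lia. apply H; lia.
Qed.

Lemma dnorm_ge (M : Type) (d : M -> M -> R) x0 phi f :
  Lip0 M d x0 f -> lip_le M d f 1 -> Rbar_le (Finite (Rabs (phi f))) (dnorm M d x0 phi).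
Proof.
  intros H1 H2. unfold dnorm. destruct (Lub_Rbar_correct (fun t => exists f, Lip0 M d x0 f /\ lip_le M d f 1 /\ t = Rabs (phi f))) as [Hub _].
  apply Hub. exists f; auto.
Qed.

Lemma dnorm_le (M : Type) (d : M -> M -> R) x0 phi c :
  (forall f, Lip0 M d x0 f -> lip_le M d f 1 -> Rabs (phi f) <= c) -> Rbar_le (dnorm M d x0 phi) (Finite c).
Proof.
  intros H. unfold dnorm. destruct (Lub_Rbar_correct (fun t => exists f, Lip0 M d x0 f /\ lip_le M d f 1 /\ t = Rabs (phi f))) as [_ Hl].
  apply Hl. intros t [f [H1 [H2 ->]]]. simpl. apply H; auto.
Qed.

Lemma dnorm_approx (M : Type) (d : M -> M -> R) x0 phi c e :
  dnorm M d x0 phi = Finite c -> 0 < e ->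
  exists f, Lip0 M d x0 f /\ lip_le M d f 1 /\ c - e < Rabs (phi f).
Proof.
  intros Hc He. apply NNPP; intro Hn.
  assert (H : Rbar_le (dnorm M d x0 phi) (Finite (c - e))).
  { apply dnorm_le. intros f H1 H2. apply Rnot_lt_le. intro Hlt. apply Hn. exists f; auto. }
  rewrite Hc in H. simpl in H. lra.
Qed.

Lemma dnorm_use (M : Type) (d : M -> M -> R) x0 phi f c :
  Lip0 M d x0 f -> lip_le M d f 1 -> Rbar_le (dnorm M d x0 phi) (Finite c) -> Rabs (phi f) <= c.
Proof.
  intros H1 H2 H3. pose proof (dnorm_ge M d x0 phi f H1 H2) as H.
  pose proof (Rbar_le_trans _ _ _ H H3). exact H0.
Qed.

Lemma dnorm_use_lt (M : Type) (d : M -> M -> R) x0 phi f c :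
  Lip0 M d x0 f -> lip_le M d f 1 -> Rbar_lt (dnorm M d x0 phi) (Finite c) -> Rabs (phi f) < c.
Proof.
  intros H1 H2 H3. pose proof (dnorm_ge M d x0 phi f H1 H2) as H.
  pose proof (Rbar_le_lt_trans _ _ _ H H3). exact H0.
Qed.

Definition scl {M : Type} (a : R) (l : list (R * M)) := map (fun p => (a * fst p, snd p)) l.

Lemma dc_app (M : Type) (l1 l2 : list (R * M)) f :
  delta_comb M (l1 ++ l2) f = delta_comb M l1 f + delta_comb M l2 f.
Proof. induction l1 as [|p l IH]; simpl; unfold delta_comb in *; simpl; [lra|]. rewrite IH; lra. Qed.

Lemma dc_scl (M : Type) a (l : list (R * M)) f :
  delta_comb M (scl a l) f = a * delta_comb M l f.
Proof. induction l as [|p l IH]; unfold delta_comb in *; simpl; [lra|]. rewrite IH; lra. Qed.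

Lemma inFM_lin (M : Type) (d : M -> M -> R) x0 mu nu a b :
  inFM M d x0 mu -> inFM M d x0 nu -> inFM M d x0 (fun f => a * mu f + b * nu f).
Proof.
  intros [[Lm [Cm Bm]] Am] [[Ln [Cn Bn]] An]. split; [split|].
  - intros f g a' b' Hf Hg. rewrite (Lm f g a' b' Hf Hg), (Ln f g a' b' Hf Hg). ring.
  - exists (Rabs a * Cm + Rabs b * Cn). intros f L Hf HL.
    specialize (Bm f L Hf HL). specialize (Bn f L Hf HL).
    eapply Rle_trans. apply Rabs_triang. rewrite !Rabs_mult.
    assert (Rabs a * Rabs (mu f) <= Rabs a * (Cm * L)) by (apply Rmult_le_compat_l; [apply Rabs_pos|lra]).
    assert (Rabs b * Rabs (nu f) <= Rabs b * (Cn * L)) by (apply Rmult_le_compat_l; [apply Rabs_pos|lra]).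
    nra.
  - intros eps He. set (e1 := eps / (2 * (Rabs a + Rabs b + 1))).
    assert (He1 : 0 < e1) by (unfold e1; apply Rdiv_lt_0_compat; [lra| pose proof (Rabs_pos a); pose proof (Rabs_pos b); lra]).
    destruct (Am e1 He1) as [l1 H1]. destruct (An e1 He1) as [l2 H2].
    exists (scl a l1 ++ scl b l2).
    apply Rbar_le_lt_trans with (Finite ((Rabs a + Rabs b) * e1)).
    + apply dnorm_le. intros f Hf Hf1. unfold fsub. rewrite dc_app, !dc_scl.
      pose proof (dnorm_use_lt M d x0 _ f e1 Hf Hf1 H1) as G1.
      pose proof (dnorm_use_lt M d x0 _ f e1 Hf Hf1 H2) as G2. unfold fsub in G1, G2.
      replace (a * mu f + b * nu f - (a * delta_comb M l1 f + b * delta_comb M l2 f))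
        with (a * (mu f - delta_comb M l1 f) + b * (nu f - delta_comb M l2 f)) by ring.
      eapply Rle_trans. apply Rabs_triang. rewrite !Rabs_mult.
      assert (Rabs a * Rabs (mu f - delta_comb M l1 f) <= Rabs a * e1) by (apply Rmult_le_compat_l; [apply Rabs_pos|lra]).
      assert (Rabs b * Rabs (nu f - delta_comb M l2 f) <= Rabs b * e1) by (apply Rmult_le_compat_l; [apply Rabs_pos|lra]).
      lra.
    + simpl. unfold e1. pose proof (Rabs_pos a); pose proof (Rabs_pos b).
      apply Rlt_le_trans with ((Rabs a + Rabs b + 1) * (eps / (2 * (Rabs a + Rabs b + 1)))).
      { apply Rmult_lt_compat_r; [|lra]. apply Rdiv_lt_0_compat; lra. }
      assert (E: (Rabs a + Rabs b + 1) * (eps / (2 * (Rabs a + Rabs b + 1))) = eps/2) by (field; lra). lra.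
Qed.

Lemma inFM_delta (M : Type) (d : M -> M -> R) x0 (hd : is_metric M d) x :
  inFM M d x0 (delta M x).
Proof.
  split; [split|].
  - intros; unfold delta; ring.
  - exists (d x x0). intros f L [Hf0 _] HL. unfold delta. specialize (HL x x0). rewrite Hf0, Rminus_0_r in HL. lra.
  - intros eps He. exists ((1, x) :: nil).
    apply Rbar_le_lt_trans with (Finite 0); [|simpl; lra].
    apply dnorm_le. intros f _ _. unfold fsub, delta, delta_comb; simpl.
    replace (f x - (1 * f x + 0)) with 0 by ring. rewrite Rabs_R0; lra.
Qed.

Lemma molecule_eq (M : Type) (d : M -> M -> R) x y : d x y <> 0 ->
  molecule M d x y = (fun f => (1 / d x y) * delta M x f + (- 1 / d x y) * delta M y f).
Proof. intros H. apply functional_extensionality. intro f. unfold molecule, delta. field. auto. Qed.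

Lemma dpos_lem (M : Type) (d : M -> M -> R) (hd : is_metric M d) x y : x <> y -> 0 < d x y.
Proof.
  intros H. destruct hd as [H1 [H2 _]]. destruct (H1 x y) as [|E]; auto.
  exfalso. apply H. apply H2. auto.
Qed.

Lemma BFM_molecule (M : Type) (d : M -> M -> R) x0 (hd : is_metric M d) x y :
  x <> y -> B_FM M d x0 (molecule M d x y).
Proof.
  intros Hxy. pose proof (dpos_lem M d hd x y Hxy) as Hp. split.
  - rewrite molecule_eq by lra. apply inFM_lin; apply inFM_delta; auto.
  - apply dnorm_le. intros f _ Hf. unfold molecule. specialize (Hf x y).
    set (q := (f x - f y) / d x y). assert (E : f x - f y = q * d x y) by (unfold q; field; lra).
    rewrite E, Rabs_mult, (Rabs_right (d x y)) in Hf by lra. nra.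
Qed.

Lemma G_bound (M : Type) (d : M -> M -> R) x0 G w c :
  S_FM_dual M d x0 G -> inFM M d x0 w -> 0 < c -> Rbar_le (dnorm M d x0 w) (Finite c) ->
  Rabs (G w) <= c.
Proof.
  intros [HGl HGn] Hw Hc Hd.
  set (w' := fun f => (1 / c) * w f + 0 * w f).
  assert (Hw' : B_FM M d x0 w').
  { split. apply inFM_lin; auto. apply dnorm_le. intros f H1 H2.
    pose proof (dnorm_use M d x0 w f c H1 H2 Hd). unfold w'.
    rewrite Rmult_0_l, Rplus_0_r, Rabs_mult, Rabs_right by (apply Rle_ge; left; apply Rdiv_lt_0_compat; lra).
    apply Rmult_le_reg_l with c; auto. replace (c * (1 / c * Rabs (w f))) with (Rabs (w f)) by (field; lra). lra. }
  assert (HG1 : Rbar_le (Finite (Rabs (G w'))) (Finite 1)).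
  { rewrite <- HGn. unfold FM_dual_norm.
    destruct (Lub_Rbar_correct (fun t => exists w, B_FM M d x0 w /\ t = Rabs (G w))) as [Hub _].
    apply Hub. exists w'; auto. }
  simpl in HG1. unfold w' in HG1. rewrite (HGl w w (1/c) 0 Hw Hw) in HG1.
  rewrite Rmult_0_l, Rplus_0_r, Rabs_mult, Rabs_right in HG1 by (apply Rle_ge; left; apply Rdiv_lt_0_compat; lra).
  apply Rmult_le_reg_l with (1/c). apply Rdiv_lt_0_compat; lra. replace (1/c*c) with 1 by (field; lra). lra.
Qed.

Lemma last_indep {A} (c : A) t a b : last (c :: t) a = last (c :: t) b.
Proof. revert c; induction t as [|e t IH]; intros c; simpl; auto. apply (IH e). Qed.

Lemma last_cons2 {A} (a b : A) t : last (b :: t) a = last t b.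
Proof. destruct t as [|c t]; simpl; auto. apply (last_indep c t a b). Qed.

Lemma chain_ge (M : Type) (d : M -> M -> R) (hd : is_metric M d) :
  forall rest a, d a (last rest a) <= chain_length M d (a :: rest).
Proof.
  destruct hd as [_ [H2 [_ Ht]]].
  induction rest as [|b t IH]; intros a.
  - simpl. assert (d a a = 0) by (apply H2; auto). lra.
  - change (chain_length M d (a :: b :: t)) with (d a b + chain_length M d (b :: t)).
    rewrite last_cons2. specialize (IH b). specialize (Ht a b (last t b)). lra.
Qed.

Lemma chain_find (M : Type) (d : M -> M -> R) (psi : M -> R) k eps :
  forall rest a, chain_steps_lt M d eps (a :: rest) ->
  psi a - psi (last rest a) > k * chain_length M d (a :: rest) ->
  exists u v, d u v < eps /\ psi u - psi v > k * d u v.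
Proof.
  induction rest as [|b t IH]; intros a Hs Hp.
  - simpl in Hp. lra.
  - change (chain_length M d (a :: b :: t)) with (d a b + chain_length M d (b :: t)) in Hp.
    rewrite last_cons2 in Hp. destruct Hs as [Hab Hs].
    destruct (Rlt_dec (k * d a b) (psi a - psi b)) as [Hl|Hl].
    + exists a, b; split; auto.
    + apply (IH b Hs). lra.
Qed.

Lemma last_chain {A} (x y : A) l : last (l ++ y :: nil) x = y.
Proof. apply last_last. Qed.

Lemma G_molecule (M : Type) (d : M -> M -> R) x0 (hd : is_metric M d) G x y :
  S_FM_dual M d x0 G -> x <> y ->
  G (molecule M d x y) = (G (delta M x) - G (delta M y)) / d x y.
Proof.
  intros [HGl _] Hxy. pose proof (dpos_lem M d hd x y Hxy).
  rewrite molecule_eq by lra. rewrite HGl by (apply inFM_delta; auto). field. lra.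
Qed.

Lemma partial_sum_facts (M : Type) (d : M -> M -> R) x0 (hd : is_metric M d) G a x y :
  S_FM_dual M d x0 G -> (forall k, x k <> y k) -> forall n,
  inFM M d x0 (mol_partial_sum M d a x y n) /\
  G (mol_partial_sum M d a x y n) = sum_n (fun k => a k * G (molecule M d (x k) (y k))) n.
Proof.
  intros HG Hne. pose proof HG as [HGl _].
  assert (Hm : forall k, inFM M d x0 (molecule M d (x k) (y k))).
  { intros k. apply BFM_molecule; auto. }
  induction n as [|n [IH1 IH2]].
  - assert (E : mol_partial_sum M d a x y 0 = fun f => a 0%nat * molecule M d (x 0%nat) (y 0%nat) f + 0 * molecule M d (x 0%nat) (y 0%nat) f).
    { apply functional_extensionality; intro f. unfold mol_partial_sum. rewrite sum_O. ring. }
    rewrite E, sum_O. split. apply inFM_lin; auto. rewrite HGl by auto. ring.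
  - assert (E : mol_partial_sum M d a x y (S n) = fun f => 1 * mol_partial_sum M d a x y n f + a (S n) * molecule M d (x (S n)) (y (S n)) f).
    { apply functional_extensionality; intro f. unfold mol_partial_sum. rewrite sum_Sn. unfold plus; simpl. ring. }
    rewrite E, sum_Sn. split. apply inFM_lin; auto. rewrite HGl by auto. rewrite IH2. unfold plus; simpl. ring.
Qed.

Lemma lip_mod (M : Type) (d : M -> M -> R) (hd : is_metric M d) (h : M -> R) u s c :
  lip_le M d h 1 ->
  lip_le M d (fun t => Rmax (h t - s) (Rmin (h t + s) (c + d t u))) 1.
Proof.
  intros Hh p q. destruct hd as [H0 [_ [Hs Ht]]].
  specialize (Hh p q). pose proof (Ht p q u). pose proof (Ht q p u). rewrite (Hs q p) in H1.
  apply Rabs_le. apply Rabs_le_between' in Hh.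
  unfold Rmax, Rmin; repeat destruct Rle_dec; lra.
Qed.

Lemma sumn_mult_l (u : nat -> R) c n : sum_n (fun k => c * u k) n = c * sum_n u n.
Proof. induction n. - rewrite !sum_O; reflexivity. - rewrite !sum_Sn, IHn. unfold plus; simpl; ring. Qed.

Lemma sum_n_minus_R (u v : nat -> R) n : sum_n u n - sum_n v n = sum_n (fun k => u k - v k) n.
Proof. induction n. - rewrite !sum_O; reflexivity. - rewrite !sum_Sn, <- IHn. unfold plus; simpl; ring. Qed.

Lemma dnorm_sub_le2 (M : Type) (d : M -> M -> R) x0 mu w :
  dnorm M d x0 mu = Finite 1 -> B_FM M d x0 w -> Rbar_le (dnorm M d x0 (fsub M mu w)) (Finite 2).
Proof.
  intros H1 [_ H2]. apply dnorm_le. intros f Hf Hf1. unfold fsub.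
  assert (A : Rbar_le (dnorm M d x0 mu) (Finite 1)) by (rewrite H1; simpl; lra).
  pose proof (dnorm_use M d x0 mu f 1 Hf Hf1 A).
  pose proof (dnorm_use M d x0 w f 1 Hf Hf1 H2).
  pose proof (Rabs_triang (mu f) (- w f)). rewrite Rabs_Ropp in H3. unfold Rminus. lra.
Qed.
Lemma key (M : Type) (d : M -> M -> R) (x0 : M) (hd : is_metric M d) (mu : (M -> R) -> R) G alpha :
  (forall eta, 0 < eta ->
     exists (a : nat -> R) (x y : nat -> M),
       (forall k, x k <> y k) /\
       mol_series_norm_conv M d x0 mu a x y /\
       (exists s, is_series (fun k => Rabs (a k)) s /\ s < 1 + eta) /\
       (forall k, disc_connectable M d (x k) (y k))) ->
  inFM M d x0 mu -> dnorm M d x0 mu = Finite 1 -> S_FM_dual M d x0 G -> G mu > 1 - alpha ->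
  forall eps, 0 < eps -> exists w, in_slice M d x0 G alpha w /\
    exists t, Finite t = dnorm M d x0 (fsub M mu w) /\ 2 - eps < t.
Proof.
  intros Hrep HmuF Hmu1 HG Hsl eps Heps.
  pose proof HG as [HGl _]. pose proof HmuF as [[HmuL _] _].
  pose proof hd as [Hd0 [Hdeq [Hdsym Hdtri]]].
  set (theta := G mu) in *.
  set (gap := (theta - (1 - alpha)) / 2).
  set (lam := theta - gap). set (kap := 1 - alpha).
  assert (Hgap : 0 < gap) by (unfold gap; lra).
  set (zeta := Rmin eps (gap / (Rabs lam + 1)) / 16).
  assert (Hlam1 : 0 < Rabs lam + 1) by (pose proof (Rabs_pos lam); lra).
  assert (Hz : 0 < zeta).
  { unfold zeta. apply Rdiv_lt_0_compat; [|lra]. apply Rmin_pos; auto. apply Rdiv_lt_0_compat; lra. }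
  assert (Hze : zeta * 16 <= eps) by (unfold zeta; pose proof (Rmin_l eps (gap / (Rabs lam + 1))); lra).
  assert (Hzg : zeta * 16 * (Rabs lam + 1) <= gap).
  { unfold zeta. pose proof (Rmin_r eps (gap / (Rabs lam + 1))).
    replace (Rmin eps (gap / (Rabs lam + 1)) / 16 * 16) with (Rmin eps (gap / (Rabs lam + 1))) by field.
    apply Rmult_le_reg_r with (/ (Rabs lam + 1)). apply Rinv_0_lt_compat; lra.
    rewrite Rmult_assoc, Rinv_r by lra. unfold Rdiv in H. lra. }
  assert (Hh : exists h, Lip0 M d x0 h /\ lip_le M d h 1 /\ 1 - zeta < mu h).
  { destruct (dnorm_approx M d x0 mu 1 zeta Hmu1 Hz) as [h0 [Hh0 [Hh01 Hv]]].
    destruct (Rle_dec 0 (mu h0)) as [Hp|Hn].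
    - exists h0. rewrite Rabs_right in Hv by lra. auto.
    - exists (fun t => -1 * h0 t + 0 * h0 t). destruct Hh0 as [Hx0 _]. split; [|split].
      + split. simpl. rewrite Hx0. ring. exists 1. intros p q. specialize (Hh01 p q).
        replace (-1 * h0 p + 0 * h0 p - (-1 * h0 q + 0 * h0 q)) with (- (h0 p - h0 q)) by ring.
        rewrite Rabs_Ropp; auto.
      + intros p q. specialize (Hh01 p q).
        replace (-1 * h0 p + 0 * h0 p - (-1 * h0 q + 0 * h0 q)) with (- (h0 p - h0 q)) by ring.
        rewrite Rabs_Ropp; auto.
      + assert (Lh : Lip0 M d x0 h0) by (split; auto; exists 1; auto).
        rewrite (HmuL h0 h0 (-1) 0 Lh Lh). rewrite Rabs_left in Hv by lra. lra. }
  destruct Hh as [h [Hh [Hh1 Hmuh]]].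
  destruct (Hrep zeta Hz) as (a & x & y & Hne & Hconv & (s & Hs & Hs1) & Hdc).
  destruct (Hconv zeta Hz) as [N HN]. specialize (HN N (le_n N)).
  set (Sn := mol_partial_sum M d a x y N) in *.
  destruct (partial_sum_facts M d x0 hd G a x y HG Hne N) as [HSF HSG]. fold Sn in HSF, HSG.
  assert (FA : forall f, Lip0 M d x0 f -> lip_le M d f 1 -> Rabs (mu f - Sn f) < zeta).
  { intros f H1 H2. exact (dnorm_use_lt M d x0 (fsub M mu Sn) f zeta H1 H2 HN). }
  assert (FB : Rabs (theta - G Sn) <= zeta).
  { set (w' := fun f => 1 * mu f + (-1) * Sn f).
    assert (E : w' = fsub M mu Sn) by (apply functional_extensionality; intro f; unfold w', fsub; ring).
    pose proof (G_bound M d x0 G w' zeta HG (inFM_lin M d x0 mu Sn 1 (-1) HmuF HSF) Hz) as Hb.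
    rewrite E in Hb. specialize (Hb (Rbar_lt_le _ _ HN)). rewrite <- E in Hb. unfold w' in Hb.
    rewrite HGl in Hb by auto. fold theta in Hb. replace (theta - G Sn) with (1 * theta + -1 * G Sn) by ring. auto. }
  set (Sig := sum_n (fun k => Rabs (a k)) N).
  assert (HSig : Sig <= s) by (apply series_partial_le; auto; intros; apply Rabs_pos).
  assert (Hmk1 : forall k f, Lip0 M d x0 f -> lip_le M d f 1 -> Rabs (molecule M d (x k) (y k) f) <= 1).
  { intros k f H1 H2. destruct (BFM_molecule M d x0 hd (x k) (y k) (Hne k)) as [_ B].
    exact (dnorm_use M d x0 _ f 1 H1 H2 B). }
  assert (HSh : Rabs (Sn h) <= Sig).
  { unfold Sn, mol_partial_sum, Sig. apply sum_n_abs_le. intros k _. rewrite Rabs_mult.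
    specialize (Hmk1 k h Hh Hh1). pose proof (Rabs_pos (a k)). nra. }
  assert (HSh2 : Rabs (mu h - Sn h) < zeta) by auto.
  assert (HSiglow : 1 - 2 * zeta < Sig).
  { pose proof (Rle_abs (Sn h)). apply Rabs_def2 in HSh2. lra. }
  assert (HGm1 : forall k, Rabs (G (molecule M d (x k) (y k))) <= 1).
  { intros k. destruct (BFM_molecule M d x0 hd (x k) (y k) (Hne k)) as [B1 B2]. apply (G_bound M d x0); auto; lra. }
  assert (Hk : exists k, (k <= N)%nat /\ a k * G (molecule M d (x k) (y k)) > lam * Rabs (a k)).
  { apply NNPP. intro Hn.
    assert (Hall : forall k, (k <= N)%nat -> a k * G (molecule M d (x k) (y k)) <= lam * Rabs (a k)).
    { intros k Hk. apply Rnot_lt_le. intro Hl. apply Hn. exists k. split; auto. }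
    pose proof (sum_n_le_loc _ _ N Hall) as HS. rewrite <- HSG, sumn_mult_l in HS. fold Sig in HS.
    apply Rabs_le_between' in FB.
    assert (lam * Sig <= lam + Rabs lam * (2 * zeta)).
    { destruct (Rle_dec 0 lam) as [Hl|Hl].
      - rewrite Rabs_right by lra. nra.
      - rewrite Rabs_left by lra. nra. }
    pose proof (Rabs_pos lam). unfold lam in *. nra. }
  destruct Hk as [k [HkN Hk]].
  set (phi := fun p => G (delta M p)).
  set (xk := x k) in *. set (yk := y k) in *. set (D := d xk yk).
  assert (HD : 0 < D) by (apply (dpos_lem M d hd); exact (Hne k)).
  assert (HGmk : G (molecule M d xk yk) * D = phi xk - phi yk).
  { rewrite (G_molecule M d x0 hd G xk yk HG (Hne k)). unfold phi, D. unfold D in HD. field. lra. }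
  assert (Hsig : exists sg, (sg = 1 \/ sg = -1) /\ sg * (phi xk - phi yk) > lam * D).
  { set (q := G (molecule M d xk yk)) in *.
    destruct (Rtotal_order (a k) 0) as [Ha|[Ha|Ha]].
    - exists (-1). split; auto. rewrite Rabs_left in Hk by lra. rewrite <- HGmk.
      assert (q < - lam) by nra. nra.
    - rewrite Ha, Rabs_R0 in Hk. lra.
    - exists 1. split; auto. rewrite Rabs_right in Hk by lra. rewrite <- HGmk.
      assert (q > lam) by nra. nra. }
  destruct Hsig as [sg [Hsg Hsgv]].
  set (K := sum_n (fun j => Rabs (a j) / d (x j) (y j)) N).
  assert (HK1 : 0 < Rabs K + 1) by (pose proof (Rabs_pos K); lra).
  assert (Hkap1 : 0 < Rabs kap + 1) by (pose proof (Rabs_pos kap); lra).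
  set (del0 := zeta / (3 * (Rabs K + 1))).
  set (e2 := gap * D / (2 * (Rabs kap + 1))).
  assert (Hdel0 : 0 < del0) by (unfold del0; apply Rdiv_lt_0_compat; lra).
  assert (He2 : 0 < e2) by (unfold e2; apply Rdiv_lt_0_compat; nra).
  set (ep := Rmin del0 e2).
  assert (Hep : 0 < ep) by (apply Rmin_pos; auto).
  destruct (Hdc k ep Hep) as [l [Hst Hlen]]. fold xk yk in Hst, Hlen. fold D in Hlen.
  pose proof (chain_ge M d hd (l ++ yk :: nil) xk) as Hlg. rewrite last_chain in Hlg. fold D in Hlg.
  set (len := chain_length M d (xk :: l ++ yk :: nil)) in *.
  assert (Hkl : kap * len < lam * D).
  { assert (E1 : lam = kap + gap) by (unfold lam, kap, gap; field).
    assert (E2 : e2 * (2 * (Rabs kap + 1)) = gap * D) by (unfold e2; field; lra).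
    assert (kap * (len - D) <= Rabs kap * (len - D)) by (apply Rmult_le_compat_r; [lra| apply Rle_abs]).
    assert (ep <= e2) by apply Rmin_r.
    assert (Rabs kap * (len - D) <= Rabs kap * e2) by (apply Rmult_le_compat_l; [apply Rabs_pos| lra]).
    rewrite E1. pose proof (Rabs_pos kap). nra. }
  destruct (chain_find M d (fun p => sg * phi p) kap ep (l ++ yk :: nil) xk Hst) as [u [v [Huv1 Huv2]]].
  { rewrite last_chain. cbv beta. replace (sg * phi xk - sg * phi yk) with (sg * (phi xk - phi yk)) by ring. fold len. lra. }
  assert (Huv : exists u' v', d u' v' < ep /\ phi u' - phi v' > kap * d u' v').
  { destruct Hsg as [-> | ->].
    - exists u, v. split; auto. lra.
    - exists v, u. rewrite Hdsym. split; auto. lra. }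
  clear u v Huv1 Huv2. destruct Huv as [u [v [Huv1 Huv2]]].
  assert (Huvne : u <> v).
  { intro E. subst v. assert (d u u = 0) by (apply Hdeq; auto). rewrite H in Huv2. lra. }
  set (del := d u v) in *.
  assert (Hdel : 0 < del) by (apply (dpos_lem M d hd); exact Huvne).
  set (w := molecule M d u v).
  assert (HwB : B_FM M d x0 w) by (apply BFM_molecule; auto).
  exists w. split.
  { split; auto. unfold w. rewrite (G_molecule M d x0 hd G u v HG Huvne). fold del.
    fold (phi u) (phi v). fold kap.
    apply Rmult_lt_reg_r with del; auto. unfold Rdiv. rewrite Rmult_assoc, Rinv_l by lra. lra. }
  set (sr := 3 * del / 2). set (c := h u - del / 2).
  set (g := fun t => Rmax (h t - sr) (Rmin (h t + sr) (c + d t u))).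
  set (g0 := fun t => g t - g x0).
  assert (Hg1 : lip_le M d g 1) by (apply lip_mod; auto).
  assert (Hg01 : lip_le M d g0 1).
  { intros p q. unfold g0. replace (g p - g x0 - (g q - g x0)) with (g p - g q) by ring. apply Hg1. }
  assert (Hg0 : Lip0 M d x0 g0) by (split; [unfold g0; ring | exists 1; auto]).
  assert (Hgh : forall t, Rabs (g t - h t) <= sr).
  { intros t. assert (0 < sr) by (unfold sr; lra). unfold g. apply Rabs_le. unfold Rmax, Rmin; repeat destruct Rle_dec; lra. }
  assert (Hhuv : Rabs (h u - h v) <= del) by (pose proof (Hh1 u v) as HH; fold del in HH; lra).
  assert (Hgu : g u = h u - del / 2).
  { unfold g, c, sr. assert (d u u = 0) by (apply Hdeq; auto). rewrite H.
    unfold Rmax, Rmin; repeat destruct Rle_dec; lra. }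
  assert (Hgv : g v = h u + del / 2).
  { unfold g, c, sr. rewrite (Hdsym v u). fold del. apply Rabs_le_between' in Hhuv.
    unfold Rmax, Rmin; repeat destruct Rle_dec; lra. }
  assert (Hwg : w g0 = -1).
  { unfold w, molecule, g0. fold del. rewrite Hgu, Hgv. field. lra. }
  assert (HSdiff : Rabs (Sn g0 - Sn h) <= 3 * del * K).
  { unfold Sn, mol_partial_sum. rewrite sum_n_minus_R. unfold K. rewrite <- sumn_mult_l.
    apply sum_n_abs_le. intros j _. cbv beta.
    assert (Hdj : 0 < d (x j) (y j)) by (apply (dpos_lem M d hd); exact (Hne j)).
    set (dj := d (x j) (y j)) in *.
    assert (E : a j * molecule M d (x j) (y j) g0 - a j * molecule M d (x j) (y j) h
               = a j * ((g (x j) - h (x j)) - (g (y j) - h (y j))) * / dj).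
    { unfold molecule, g0. fold dj. field. lra. }
    rewrite E. rewrite !Rabs_mult, Rabs_inv, (Rabs_right dj) by lra.
    assert (HB : Rabs ((g (x j) - h (x j)) - (g (y j) - h (y j))) <= 3 * del).
    { pose proof (Hgh (x j)). pose proof (Hgh (y j)). pose proof (Rabs_triang (g (x j) - h (x j)) (- (g (y j) - h (y j)))).
      rewrite Rabs_Ropp in H1. unfold sr in *. unfold Rminus at 1. lra. }
    unfold Rdiv. pose proof (Rabs_pos (a j)). pose proof (Rinv_0_lt_compat dj Hdj).
    replace (3 * del * (Rabs (a j) * / dj)) with (Rabs (a j) * (3 * del) * / dj) by ring. apply Rmult_le_compat_r; [lra|]. apply Rmult_le_compat_l; [apply Rabs_pos | exact HB]. }
  assert (H3K : 3 * del * K < zeta).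
  { assert (del < del0) by (pose proof (Rmin_l del0 e2); fold ep in H; lra).
    assert (E : del0 * (3 * (Rabs K + 1)) = zeta) by (unfold del0; field; lra).
    pose proof (Rle_abs K). nra. }
  assert (Hmug0 : 1 - 4 * zeta < mu g0).
  { pose proof (FA g0 Hg0 Hg01). apply Rabs_def2 in H. apply Rabs_def2 in HSh2. apply Rabs_le_between' in HSdiff. lra. }
  assert (Hup := dnorm_sub_le2 M d x0 mu w Hmu1 HwB).
  assert (Hlow := dnorm_ge M d x0 (fsub M mu w) g0 Hg0 Hg01).
  unfold fsub at 1 in Hlow. rewrite Hwg in Hlow.
  destruct (dnorm M d x0 (fsub M mu w)) as [r| |] eqn:Er.
  - exists r. split; auto. simpl in Hlow. pose proof (Rle_abs (mu g0 - -1)). lra.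
  - simpl in Hup. contradiction.
  - simpl in Hlow. contradiction.
Qed.

Theorem proposition6p3 (M : Type) (d : M -> M -> R) (x0 : M)
  (hd : is_metric M d) (mu : (M -> R) -> R) :
  S_FM M d x0 mu ->
  (forall eta, 0 < eta ->
     exists (a : nat -> R) (x y : nat -> M),
       (forall k, x k <> y k) /\
       mol_series_norm_conv M d x0 mu a x y /\
       (exists s, is_series (fun k => Rabs (a k)) s /\ s < 1 + eta) /\
       (forall k, disc_connectable M d (x k) (y k))) ->
  Delta_point M d x0 mu.
Proof.
  intros Hmu Hrep. split; [exact Hmu|].
  intros G alpha HG Hal [HBmu Hsl].
  destruct Hmu as [HmuF Hmu1].
  set (T := fun t => exists w, in_slice M d x0 G alpha w /\ Finite t = dnorm M d x0 (fsub M mu w)).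
  assert (Hub : forall t, T t -> t <= 2).
  { intros t [w [[Hw _] Ht]]. pose proof (dnorm_sub_le2 M d x0 mu w Hmu1 Hw) as H.
    rewrite <- Ht in H. exact H. }
  assert (Hkey : forall eps, 0 < eps -> exists t, T t /\ 2 - eps < t).
  { intros eps He.
    destruct (key M d x0 hd mu G alpha Hrep HmuF Hmu1 HG Hsl eps He) as [w [Hw [t [Ht Ht2]]]].
    exists t. split; auto. exists w; auto. }
  apply is_lub_Rbar_unique. split.
  - intros t Ht. simpl. apply Hub; auto.
  - intros b Hb. destruct b as [r| |].
    + simpl. apply Rnot_lt_le. intro Hr. destruct (Hkey (2 - r)) as [t [Ht Ht2]]; [lra|].
      specialize (Hb t Ht). simpl in Hb. lra.
    + simpl; auto.
    + destruct (Hkey 1) as [t [Ht _]]; [lra|]. specialize (Hb t Ht). simpl in Hb. auto.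
Qed.
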